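(* Let $V$ be an infinite-dimensional left vector space over a field $K$. Then there exists an automorphism of the Grassmann graph on $\mathcal G$ (a bijection $\phi:\mathcal G\to\mathcal G$ with $X\sim Y\iff X^\phi\sim Y^\phi$) which is not an automorphism of the distant graph on $\mathcal G$; more precisely, there exist $P,Q\in\mathcal G$ with $P\oplus Q=V$ but $P^\phi\oplus Q^\phi\neq V$.
   Context: Fields are not necessarily commutative (division rings). $\mathcal G$ denotes the set of all subspaces $X\le V$ such that $X$ is isomorphic to $V/X$. Two elements $X,Y\in\mathcal G$ are distant if $X\oplus Y=V$, and adjacent ($X\sim Y$) if $\dim((X+Y)/X)=\dim((X+Y)/Y)=1$. The Grassmann graph (resp. distant graph) on $\mathcal G$ has vertex set $\mathcal G$ and edges the pairs of adjacent (resp. distant) elements. *)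

(* Defs.v *)
From HB Require Import structures.
From mathcomp Require Import all_boot all_order all_algebra.
Set Implicit Arguments. Unset Strict Implicit. Unset Printing Implicit Defensive.
Import GRing.Theory.
Local Open Scope ring_scope.

Section Grass.
Variables (K : unitRingType) (V : lmodType K).

Definition subspace (X : V -> Prop) : Prop :=
  X 0 /\ forall (a : K) (u v : V), X u -> X v -> X (a *: u + v).

Definition infinite_dim : Prop :=
  ~ exists s : seq V, forall v : V,
      exists c : nat -> K, v = \sum_(i < size s) c i *: s`_i.

Definition addsp (X Y : V -> Prop) : V -> Prop :=
  fun v => exists x y, X x /\ Y y /\ v = x + y.

Definition linmap (f : V -> V) : Prop :=
  forall (a : K) (u v : V), f (a *: u + v) = a *: f u + f v.

(* X is isomorphic to V/X: there is a linear map of V onto X whose kernel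
   is exactly X (first isomorphism theorem: V/X ~ image = X). *)
Definition iso_quot (X : V -> Prop) : Prop :=
  exists f : V -> V, linmap f /\
    (forall v, X (f v)) /\
    (forall x, X x -> exists v, f v = x) /\
    (forall v, f v = 0 <-> X v).

Definition inG (X : V -> Prop) : Prop := subspace X /\ iso_quot X.

Definition Gr := {X : V -> Prop | inG X}.

(* dim(Z/X) = 1 for subspaces X <= Z : Z/X is spanned by the class of a
   single vector w of Z not in X. *)
Definition quot_dim1 (Z X : V -> Prop) : Prop :=
  (forall x, X x -> Z x) /\
  exists w, Z w /\ ~ X w /\
    forall z, Z z -> exists (x : V) (a : K), X x /\ z = x + a *: w.

Definition adjacent (X Y : Gr) : Prop :=
  quot_dim1 (addsp (proj1_sig X) (proj1_sig Y)) (proj1_sig X) /\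
  quot_dim1 (addsp (proj1_sig X) (proj1_sig Y)) (proj1_sig Y).

Definition distant (X Y : Gr) : Prop :=
  (forall v, proj1_sig X v -> proj1_sig Y v -> v = 0) /\
  (forall v, addsp (proj1_sig X) (proj1_sig Y) v).

End Grass.

(* Main.v *)
Require Import Defs.
From HB Require Import structures.
From mathcomp Require Import all_boot all_order all_algebra.
From mathcomp Require Import boolp classical_sets.
From Stdlib Require Import Relations ClassicalEpsilon FunctionalExtensionality PropExtensionality ProofIrrelevance Classical.
Import GRing.Theory.
Local Open Scope ring_scope.
Set Implicit Arguments. Unset Strict Implicit. Unset Printing Implicit Defensive.

Lemma myZorn (T : Type) (P : (T -> Prop) -> Prop) :
  (forall F : (T -> Prop) -> Prop, (forall X, F X -> P X) ->
     (forall X Y, F X -> F Y -> (forall t, X t -> Y t) \/ (forall t, Y t -> X t)) ->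
     P (fun t => exists X, F X /\ X t)) ->
  exists A, P A /\ forall B, P B -> (forall t, A t -> B t) -> forall t, B t -> A t.
Proof.
move=> h.
have [A [PA mA]] : exists A, P A /\ forall B, (A `<` B)%classic -> ~ P B.
  apply: Zorn_bigcup.
  move=> F FP tF.
  match goal with |- P ?U => have -> : U = (fun t => exists X, F X /\ X t) end.
    apply/funext => t; apply/propext; split.
      by move=> [X FX Xt]; exists X.
    by move=> [X [FX Xt]]; exists X.
  apply: h => [X FX|X Y FX FY]; first exact: FP.
  by case: (tF X Y FX FY) => s; [left|right] => t; exact: s.
exists A; split=> // B PB AB t Bt.
apply: contrapT => nAt.
apply: (mA B) => //; split; first exact: AB.
by move=> e; apply: nAt; apply: e.
Qed.

Section Lin.
Variables (K : unitRingType) (V : lmodType K).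

Lemma lin0 (f : V -> V) : linmap f -> f 0 = 0.
Proof.
move=> lf; have h := lf 1 0 0; rewrite !scale1r addr0 in h.
by apply: (addrI (f 0)); rewrite addr0 -h.
Qed.

Lemma linD (f : V -> V) : linmap f -> forall u v, f (u + v) = f u + f v.
Proof. by move=> lf u v; rewrite -[u]scale1r lf !scale1r. Qed.

Lemma linZ (f : V -> V) : linmap f -> forall a u, f (a *: u) = a *: f u.
Proof. by move=> lf a u; rewrite -[a *: u]addr0 lf lin0 // addr0. Qed.

Lemma linN (f : V -> V) : linmap f -> forall u, f (- u) = - f u.
Proof. by move=> lf u; rewrite -scaleN1r linZ // scaleN1r. Qed.

Lemma linB (f : V -> V) : linmap f -> forall u v, f (u - v) = f u - f v.
Proof. by move=> lf u v; rewrite linD // linN. Qed.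

Lemma Gr_eq (X Y : Gr V) : (forall v, sval X v <-> sval Y v) -> X = Y.
Proof.
case: X => X hX; case: Y => Y hY /= h.
have e : X = Y by apply: functional_extensionality => v; apply: propositional_extensionality.
by subst; rewrite (proof_irrelevance _ hX hY).
Qed.

Lemma qd1_congr (Z Z' X X' : V -> Prop) :
  (forall v, Z v <-> Z' v) -> (forall v, X v <-> X' v) ->
  quot_dim1 Z X -> quot_dim1 Z' X'.
Proof.
move=> hZ hX [sub [w [Zw [nXw hw]]]]; split.
  by move=> x /hX /sub /hZ.
exists w; split; first by apply/hZ.
split; first by move=> /hX.
move=> z /hZ /hw [x [a [Xx ->]]]; exists x, a; split=> //; exact/hX.
Qed.

Section Inv.
Variable g : V -> V.
Hypothesis lg : linmap g.
Hypothesis gg : forall v, g (g v) = v.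

Lemma qd1_g (Z X : V -> Prop) : quot_dim1 Z X ->
  quot_dim1 (fun v => Z (g v)) (fun v => X (g v)).
Proof.
move=> [sub [w [Zw [nXw hw]]]]; split; first by move=> x /sub.
exists (g w); rewrite gg; split=> //; split=> //.
move=> z /hw [x [a [Xx e]]]; exists (g x), a; rewrite gg; split=> //.
by rewrite -[z]gg e linD // linZ.
Qed.

Lemma addsp_g (X Y : V -> Prop) v :
  addsp (fun v => X (g v)) (fun v => Y (g v)) v <-> addsp X Y (g v).
Proof.
split.
  by move=> [x [y [Xx [Yy ->]]]]; exists (g x), (g y); rewrite linD.
move=> [x [y [Xx [Yy e]]]]; exists (g x), (g y); rewrite !gg; do 2!split=>//.
by rewrite -linD // -e gg.
Qed.

Lemma inG_g (X : V -> Prop) : inG X -> inG (fun v => X (g v)).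
Proof.
move=> [[X0 Xc] [F [lF [FX [Fon Fker]]]]]; split.
  split; first by rewrite lin0.
  by move=> a u v Xu Xv; rewrite lg; apply: Xc.
exists (fun v => g (F (g v))); split.
  by move=> a u v; rewrite lg lF lg.
split; first by move=> v; rewrite gg.
split.
  move=> x /Fon [v Fv]; exists (g v); by rewrite gg Fv gg.
move=> v; split.
  by move=> h; apply/Fker; rewrite -[F _]gg h lin0.
by move=> /Fker ->; rewrite lin0.
Qed.

Definition gG (X : Gr V) : Gr V := exist _ _ (inG_g (proj2_sig X)).

Lemma gGK X : gG (gG X) = X.
Proof. by apply: Gr_eq => v /=; rewrite gg. Qed.

Lemma adj_gG X Y : adjacent X Y -> adjacent (gG X) (gG Y).
Proof.
move=> [h1 h2]; split.
  apply: qd1_congr (qd1_g h1) => v //; by rewrite addsp_g.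
apply: qd1_congr (qd1_g h2) => v //; by rewrite addsp_g.
Qed.

End Inv.
End Lin.

Section Span.
Variables (K : unitRingType) (V : lmodType K).

Definition spanS (s : seq V) (x : V) :=
  exists c : nat -> K, x = \sum_(i < size s) c i *: s`_i.

Lemma span_cons s w x k : spanS s x -> spanS (w :: s) (k *: w + x).
Proof.
move=> [c ->]; exists (fun i => if i is i'.+1 then c i' else k).
by rewrite /= big_ord_recl /=.
Qed.

Lemma span_cat s1 s2 x1 x2 : spanS s1 x1 -> spanS s2 x2 -> spanS (s1 ++ s2) (x1 + x2).
Proof.
move=> [c1 ->] [c2 ->].
exists (fun i => if (i < size s1)%N then c1 i else c2 (i - size s1)%N).
rewrite size_cat big_split_ord; congr (_ + _).
  by apply: eq_bigr => i _; rewrite /= nth_cat ltn_ord.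
apply: eq_bigr => i _; rewrite /= nth_cat.
by rewrite ltnNge leq_addr /= addKn.
Qed.

Lemma lin_sum (f : V -> V) n (c : nat -> K) (s : seq V) : linmap f ->
  f (\sum_(i < n) c i *: s`_i) = \sum_(i < n) c i *: f s`_i.
Proof.
move=> lf; elim: n => [|n IH]; first by rewrite !big_ord0 lin0.
by rewrite !big_ord_recr /= linD // linZ // IH.
Qed.

Lemma span_map (f : V -> V) s x : linmap f -> spanS s x -> spanS (map f s) (f x).
Proof.
move=> lf [c ->]; exists c; rewrite lin_sum // size_map.
by apply: eq_bigr => i _; rewrite (nth_map 0) // ltn_ord.
Qed.

End Span.

Section Key.
Variables (K : unitRingType) (V : lmodType K).
Variables (pi T : V -> V) (mu : V -> K) (p0 : V).
Hypotheses (lpi : linmap pi) (lT : linmap T)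
  (lmu : forall a u v, mu (a *: u + v) = a * mu u + mu v)
  (pipi : forall v, pi (pi v) = pi v) (TT : forall v, T (T v) = v)
  (piT : forall v, pi (T v) = T v - T (pi v))
  (pip0 : pi p0 = p0) (mup0 : mu p0 = 1) (muq0 : mu (T p0) = -1)
  (hinf : infinite_dim V).

Lemma mu0 : mu 0 = 0.
Proof. have h := lmu 1 0 0; rewrite !scale1r addr0 mul1r in h.
by apply: (addrI (mu 0)); rewrite addr0 -h. Qed.
Lemma muD u v : mu (u + v) = mu u + mu v.
Proof. by have := lmu 1 u v; rewrite scale1r mul1r. Qed.
Lemma muZ a u : mu (a *: u) = a * mu u.
Proof. by rewrite -[a *: u]addr0 lmu mu0 addr0. Qed.

Definition Pp (v : V) : Prop := pi v = v.
Definition Qp (v : V) : Prop := pi v = 0.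

Definition qm (v : V) := v - pi v.
Lemma lqm : linmap qm.
Proof. by move=> a u v; rewrite /qm lpi scalerBr opprD addrACA. Qed.

Lemma piq v : pi (qm v) = 0.
Proof. by rewrite /qm linB // pipi subrr. Qed.

Lemma PG : inG Pp.
Proof.
split.
  split; first by rewrite /Pp lin0.
  by move=> a u v; rewrite /Pp lpi => -> ->.
exists (fun v => T (qm v)); split.
  by move=> a u v; rewrite lqm lT.
split; first by move=> v; rewrite /Pp piT piq lin0 // subr0.
split.
  move=> x Px; exists (T x); rewrite /qm piT Px subKr TT //.
move=> v; split.
  move=> h; have : qm v = 0 by rewrite -[qm v]TT h lin0.
  by move=> /subr0_eq.
by rewrite /Pp /qm => ->; rewrite subrr lin0.
Qed.

Lemma QG : inG Qp.
Proof.
split.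
  split; first by rewrite /Qp lin0.
  by move=> a u v; rewrite /Qp lpi => -> ->; rewrite scaler0 addr0.
exists (fun v => T (pi v)); split.
  by move=> a u v; rewrite lpi lT.
split; first by move=> v; rewrite /Qp piT pipi subrr.
split.
  by move=> x Qx; exists (T x); rewrite piT Qx lin0 // subr0 TT.
move=> v; split.
  by move=> h; rewrite /Qp -[pi v]TT h lin0.
by rewrite /Qp => ->; rewrite lin0.
Qed.

Definition Pg : Gr V := exist _ Pp PG.
Definition Qg : Gr V := exist _ Qp QG.

Lemma dist_PQ : distant Pg Qg.
Proof.
split; first by rewrite /= /Pp /Qp => v -> .
move=> v; exists (pi v), (qm v); split; first exact: pipi.
split; first exact: piq.
by rewrite /qm addrC subrK.
Qed.

Definition d0 := T p0 - p0.
Definition g (v : V) := v + mu v *: d0.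

Lemma lg : linmap g.
Proof. by move=> a u v; rewrite /g lmu scalerDl -scalerA addrACA -scalerDr. Qed.

Lemma mud0 : mu d0 = -1 - 1.
Proof. by rewrite /d0 muD -scaleN1r muZ mup0 muq0 mulr1. Qed.

Lemma mug v : mu (g v) = - mu v.
Proof.
rewrite /g muD muZ mud0 mulrBr mulrN1 mulr1 addrA.
by rewrite subrr sub0r.
Qed.

Lemma gg v : g (g v) = v.
Proof. by rewrite {1}/g mug scaleNr /g addrK. Qed.

Lemma gp0 : g p0 = T p0.
Proof. by rewrite /g mup0 scale1r /d0 addrC subrK. Qed.

Lemma gq0 : g (T p0) = p0.
Proof. by rewrite /g muq0 scaleN1r /d0 opprB addrC subrK. Qed.

Lemma Qq0 : Qp (T p0).
Proof. by rewrite /Qp piT pip0 subrr. Qed.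

Lemma nQp0 : ~ Qp p0.
Proof.
rewrite /Qp pip0 => h; have := mup0; rewrite h mu0 => /eqP.
by rewrite eq_sym oner_eq0.
Qed.

Definition gGr := gG lg gg.

Lemma adjQ : adjacent Qg (gGr Qg).
Proof.
have piD := linD lpi; have piZ := linZ lpi; have gD := linD lg.
have pi0 := lin0 lpi; have g0 := lin0 lg.
rewrite /adjacent /=; split.
  split.
    move=> x Qx; exists x, 0; rewrite addr0; split=> //; split=> //.
    by rewrite /Qp g0 pi0.
  exists p0; split.
    exists 0, p0; rewrite add0r; split; first by rewrite /Qp pi0.
    by rewrite /Qp gp0 Qq0.
  split; first exact: nQp0.
  move=> z [q [v [Qq [Qgv ->]]]].
  exists (q + g v + mu (g v) *: T p0), (- mu (g v)); split.
    by rewrite /Qp piD piD piZ Qq Qgv Qq0 scaler0 !addr0.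
  have e : v = g v + mu (g v) *: d0 := esym (gg v).
  by rewrite {1}e /d0 scalerBr scaleNr !addrA.
split.
  by move=> x Qgx; exists 0, x; rewrite add0r; split=> //; rewrite /Qp pi0.
exists (T p0); split.
  exists (T p0), 0; rewrite addr0; split; first exact: Qq0.
  by split=>//; rewrite /Qp g0 pi0.
split; first by rewrite /Qp gq0; exact: nQp0.
move=> z [q [v [Qq [Qgv ->]]]].
exists (v + (q + mu q *: T p0)), (- mu q); split.
  rewrite /Qp gD.
  have -> : g (q + mu q *: T p0) = q + mu q *: T p0.
    by rewrite /g muD muZ muq0 mulrN1 subrr scale0r addr0.
  by rewrite piD piD piZ Qgv Qq Qq0 scaler0 !add0r.
by rewrite scaleNr addrA addrK addrC.
Qed.

Definition inQS (s : seq V) (x : V) := exists q y, Qp q /\ spanS s y /\ x = q + y.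

Lemma qd_J (Z A B : V -> Prop) s : quot_dim1 Z A -> (forall b, B b -> Z b) ->
  (forall a, A a -> inQS s a) -> exists s', forall b, B b -> inQS s' b.
Proof.
move=> [_ [w [_ [_ hw]]]] BZ AS; exists (w :: s) => b /BZ /hw [a [k [Aa ->]]].
have [q [y [Qq [sy ->]]]] := AS a Aa.
exists q, (k *: w + y); split=> //; split; first exact: span_cons.
by rewrite -addrA [y + _]addrC.
Qed.

Definition JX (X : Gr V) := exists s, forall x, sval X x -> inQS s x.

Lemma sub0 (X : Gr V) : sval X 0.
Proof. by case: X => X [[]]. Qed.

Lemma adj_J X Y : adjacent X Y -> (JX X <-> JX Y).
Proof.
move=> [h1 h2]; split.
  move=> [s hs]; apply: (qd_J h1) hs => y Yy.
  by exists 0, y; rewrite add0r; split=> //; exact: sub0.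
move=> [s hs]; apply: (qd_J h2) hs => x Xx.
by exists x, 0; rewrite addr0; split=> //; split=> //; exact: sub0.
Qed.

Lemma crst_J X Y : clos_refl_sym_trans _ (@adjacent _ V) X Y -> (JX X <-> JX Y).
Proof.
elim=> [x y /adj_J //| x // | x y _ h | x y z _ h1 _ h2]; first by tauto.
by tauto.
Qed.

Lemma JQ : JX Qg.
Proof.
exists [::] => x Qx; exists x, 0; split=> //; split; last by rewrite addr0.
by exists (fun _ => 0); rewrite big_ord0.
Qed.

Lemma notJP : ~ JX Pg.
Proof.
move=> [s hs]; apply: hinf.
exists (map (fun x => T (pi x)) s ++ s) => v.
have piD := linD lpi.
have [q [z [Qq [sz e]]]] := hs (pi v) (pipi v).
pose y := q + qm v.
have Qy : Qp y by rewrite /Qp /y piD Qq piq addr0.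
have PTy : Pp (T y) by rewrite /Pp piT Qy lin0 // subr0.
have [q' [z' [Qq' [sz' e']]]] := hs _ PTy.
have ey : y = T (pi z').
  by rewrite -[y]TT -PTy e' piD Qq' add0r.
have : spanS (map (fun x => T (pi x)) s ++ s) (y + z).
  apply: span_cat => //; rewrite ey.
  apply: (@span_map _ _ (fun x => T (pi x))) => //.
  by move=> a u w; rewrite lpi lT.
have -> : y + z = v.
  by rewrite /y /qm addrAC -addrA e addrA subrKC.
by [].
Qed.

Definition C (X : Gr V) := clos_refl_sym_trans _ (@adjacent _ V) X Qg.

Lemma C_g X : C X -> C (gGr X).
Proof.
move=> h; apply: rst_trans (rst_sym _ _ _ _ (rst_step _ _ _ _ adjQ)).
elim: h => [x y /(adj_gG lg gg) h|x|x y _ h|x y z _ h1 _ h2].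
- exact: rst_step.
- exact: rst_refl.
- exact: rst_sym.
- exact: rst_trans h2.
Qed.

Lemma C_gE X : C (gGr X) <-> C X.
Proof.
split; last exact: C_g.
by move=> /C_g; rewrite /gGr gGK.
Qed.

Definition phi (X : Gr V) : Gr V :=
  if excluded_middle_informative (C X) then gGr X else X.

Lemma phiK X : phi (phi X) = X.
Proof.
rewrite /phi; case: (excluded_middle_informative (C X)) => h.
  case: excluded_middle_informative => h'; first by rewrite /gGr gGK.
  by exfalso; apply/h'/C_gE.
by case: excluded_middle_informative.
Qed.

Lemma phi_adj X Y : adjacent X Y -> adjacent (phi X) (phi Y).
Proof.
move=> a.
have CXY : C X <-> C Y.
  split=> h.
    exact: rst_trans (rst_sym _ _ _ _ (rst_step _ _ _ _ a)) h.
  exact: rst_trans (rst_step _ _ _ _ a) h.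
rewrite /phi; case: excluded_middle_informative => h1;
  case: excluded_middle_informative => h2 //.
- exact: adj_gG.
- by exfalso; tauto.
- by exfalso; tauto.
Qed.

Theorem key_main : exists phi : Gr V -> Gr V,
    bijective phi /\
    (forall X Y : Gr V, adjacent X Y <-> adjacent (phi X) (phi Y)) /\
    exists P Q : Gr V, distant P Q /\ ~ distant (phi P) (phi Q).
Proof.
exists phi; split; first by exists phi; exact: phiK.
split.
  move=> X Y; split; first exact: phi_adj.
  by move=> /phi_adj; rewrite !phiK.
exists Pg, Qg; split; first exact: dist_PQ.
have CQ : C Qg by exact: rst_refl.
have nCP : ~ C Pg by move=> /crst_J h; apply: notJP; apply/h; exact: JQ.
rewrite /phi; destruct (excluded_middle_informative (C Pg)) as [h1|h1]; first by case: nCP.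
destruct (excluded_middle_informative (C Qg)) as [h2|h2]; last by case: h2.
move=> [h _]; apply: nQp0.
have : p0 = 0.
  apply: h; first exact: pip0.
  by rewrite /= gp0; exact: Qq0.
by move=> e; rewrite /Qp e lin0.
Qed.

End Key.

Section Esum.
Variables (K : unitRingType) (V : lmodType K) (e : nat -> V).

Definition esum N (c : nat -> K) := \sum_(i < N) c i *: e i.
Definition inSp (v : V) := exists N c, v = esum N c.
Definition indep := forall N c, esum N c = 0 -> forall i, (i < N)%N -> c i = 0.
Definition supp N (c : nat -> K) := forall i, (N <= i)%N -> c i = 0.
Definition rs N (c : nat -> K) i := if (i < N)%N then c i else 0.

Lemma supp_rs N c : supp N (rs N c).
Proof. by move=> i; rewrite /rs ltnNge => ->. Qed.

Lemma esum_rs M N c : (N <= M)%N -> esum M (rs N c) = esum N c.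
Proof.
elim: M => [|M IH] NM.
  by move: NM; rewrite leqn0 => /eqP ->; rewrite /esum !big_ord0.
case: (ltngtP N M.+1) => [lt|gt|->]; first last.
- by apply: eq_bigr => i _; rewrite /rs ltn_ord.
- by move: NM; rewrite leqNgt gt.
rewrite /esum big_ord_recr /= /rs ltnNge -ltnS lt /= scale0r addr0.
exact: IH.
Qed.

Lemma supp_rsE N c : supp N c -> rs N c = c.
Proof.
move=> s; apply: functional_extensionality => i; rewrite /rs.
by case: ltnP => // /s ->.
Qed.

Lemma esum_widen M N c : supp N c -> (N <= M)%N -> esum M c = esum N c.
Proof. by move=> s NM; rewrite -{1}(supp_rsE s) esum_rs. Qed.

Lemma esum_lin N a c1 c2 :
  esum N (fun i => a * c1 i + c2 i) = a *: esum N c1 + esum N c2.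
Proof.
rewrite /esum scaler_sumr -big_split /=; apply: eq_bigr => i _.
by rewrite scalerDl scalerA.
Qed.

Lemma supp_lin N a c1 c2 : supp N c1 -> supp N c2 -> supp N (fun i => a * c1 i + c2 i).
Proof. by move=> s1 s2 i h; rewrite s1 // s2 // mulr0 addr0. Qed.

Lemma supp_max N M c : supp N c -> supp (maxn N M) c.
Proof. by move=> s i h; apply: s; apply: leq_trans h; exact: leq_maxl. Qed.
Lemma supp_maxr N M c : supp M c -> supp (maxn N M) c.
Proof. by move=> s i h; apply: s; apply: leq_trans h; exact: leq_maxr. Qed.

Lemma inSp_lin a u v : inSp u -> inSp v -> inSp (a *: u + v).
Proof.
move=> [N1 [c1 ->]] [N2 [c2 ->]].
exists (maxn N1 N2), (fun i => a * rs N1 c1 i + rs N2 c2 i).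
by rewrite esum_lin !esum_rs ?leq_maxl ?leq_maxr.
Qed.

Lemma inSp0 : inSp 0.
Proof. by exists 0%N, (fun _ => 0); rewrite /esum big_ord0. Qed.

Definition fs c := exists N, supp N c.
Definition bnd c := epsilon (inhabits 0%N) (fun N => supp N c).
Definition Esum c := esum (bnd c) c.

Lemma Esum_eq N c : supp N c -> Esum c = esum N c.
Proof.
move=> s; have sb : supp (bnd c) c.
  exact: (epsilon_spec (inhabits 0%N) (fun N => supp N c) (ex_intro _ N s)).
have h1 := esum_widen sb (leq_maxr N (bnd c)).
have h2 := esum_widen s (leq_maxl N (bnd c)).
by rewrite /Esum -h1 h2.
Qed.

Lemma Esum_lin N a c1 c2 : supp N c1 -> supp N c2 ->
  Esum (fun i => a * c1 i + c2 i) = a *: Esum c1 + Esum c2.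
Proof.
move=> s1 s2; rewrite (Esum_eq (supp_lin a s1 s2)) (Esum_eq s1) (Esum_eq s2).
exact: esum_lin.
Qed.

End Esum.


Lemma zmod3 (M : zmodType) (x1 x2 x3 y1 y2 y3 : M) :
  x1 + x2 + x3 = y1 + y2 + y3 -> (x1 - y1) + (x2 - y2) = y3 - x3.
Proof.
move=> h.
have e : x1 + x2 + x3 - (y1 + y2 + y3) = (x1 - y1) + (x2 - y2) + (x3 - y3).
  by rewrite !opprD addrACA [X in X + _ = _]addrACA.
have : (x1 - y1) + (x2 - y2) + (x3 - y3) = 0 by rewrite -e h subrr.
move=> /eqP; rewrite addr_eq0 => /eqP ->; by rewrite opprB.
Qed.

Lemma lin3 (R : pzRingType) (M : lmodType R) a (x1 x2 x3 y1 y2 y3 : M) :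
  a *: (x1 + x2 + x3) + (y1 + y2 + y3) = (a *: x1 + y1) + (a *: x2 + y2) + (a *: x3 + y3).
Proof. by rewrite !scalerDr addrACA [X in X + _ = _]addrACA. Qed.

Section Frame.
Variables (K : unitRingType) (V : lmodType K).
Variables (e : nat -> V) (G : V * V -> Prop).
Hypotheses
 (Gc : forall a x y x' y', G (x,y) -> G (x',y') -> G (a *: x + x', a *: y + y'))
 (Gfun : forall y, G (0,y) -> y = 0) (Ginj : forall x, G (x,0) -> x = 0)
 (Gd : forall x y x' y', G (x,y) -> G (x',y') -> inSp e (x + y') -> x = 0 /\ y' = 0)
 (G0 : G (0,0)) (ind : indep e)
 (tot : forall v, exists x y x' y' w, G (x,y) /\ G (x',y') /\ inSp e w /\ v = x + y' + w).

Definition dom x := exists y, G (x,y).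
Definition ran y := exists x, G (x,y).

Lemma dom_lin a x x' : dom x -> dom x' -> dom (a *: x + x').
Proof. by move=> [y h] [y' h']; exists (a *: y + y'); apply: Gc. Qed.
Lemma ran_lin a x x' : ran x -> ran x' -> ran (a *: x + x').
Proof. by move=> [y h] [y' h']; exists (a *: y + y'); apply: Gc. Qed.
Lemma dom0 : dom 0. Proof. by exists 0. Qed.
Lemma ran0 : ran 0. Proof. by exists 0. Qed.
Lemma domB x x' : dom x -> dom x' -> dom (x - x').
Proof. by move=> h h'; rewrite addrC -scaleN1r; apply: dom_lin. Qed.
Lemma ranB x x' : ran x -> ran x' -> ran (x - x').
Proof. by move=> h h'; rewrite addrC -scaleN1r; apply: ran_lin. Qed.

Lemma dec_uniq d r c d' r' c' N N' : dom d -> ran r -> supp N c ->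
  dom d' -> ran r' -> supp N' c' ->
  d + r + esum e N c = d' + r' + esum e N' c' -> d = d' /\ r = r' /\ c = c'.
Proof.
move=> hd hr hc hd' hr' hc' eq.
rewrite -(esum_widen e hc (leq_maxl N N')) -(esum_widen e hc' (leq_maxr N N')) in eq.
set M := maxn N N' in eq.
have e2 := zmod3 eq.
have e3 : esum e M c' - esum e M c = esum e M (fun i => (-1) * c i + c' i).
  by rewrite esum_lin scaleN1r addrC.
rewrite e3 in e2.
have [y hy] := domB hd hd'; have [x hx] := ranB hr hr'.
have [z1 z2] := Gd hy hx (ex_intro _ M (ex_intro _ _ e2)).
move: e2; rewrite z1 z2 addr0 => /esym e4.
have hcc : forall i, c i = c' i.
  move=> i; case: (ltnP i M) => iM.
    have := ind e4 iM; move/eqP; rewrite mulN1r addrC subr_eq0 => /eqP.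
    by move=> ->.
  rewrite hc ?hc' //; [apply: leq_trans iM; exact: leq_maxr|
     apply: leq_trans iM; exact: leq_maxl].
split; first by apply/eqP; rewrite -subr_eq0 z1.
split; first by apply/eqP; rewrite -subr_eq0 z2.
exact: functional_extensionality.
Qed.

Definition decP v (t : V * V * (nat -> K)) :=
  dom t.1.1 /\ ran t.1.2 /\ fs t.2 /\ v = t.1.1 + t.1.2 + Esum e t.2.
Definition dec v := epsilon (inhabits (0, 0, fun _ => 0)) (decP v).
Definition pd v := (dec v).1.1.
Definition pr v := (dec v).1.2.
Definition cf v := (dec v).2.

Lemma dec_spec v : dom (pd v) /\ ran (pr v) /\ fs (cf v) /\ v = pd v + pr v + Esum e (cf v).
Proof.
apply: (epsilon_spec (inhabits (0, 0, fun _ => 0)) (decP v)).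
have [x [y [x' [y' [w [h [h' [[N [c ew]] ->]]]]]]]] := tot v.
exists (x, y', rs N c); split; first by exists y.
split; first by exists x'.
split; first by exists N; exact: supp_rs.
by rewrite /= (Esum_eq e (supp_rs (N:=N) c)) esum_rs // ew.
Qed.

Lemma dec_eq v d r c N : dom d -> ran r -> supp N c -> v = d + r + Esum e c ->
  [/\ pd v = d, pr v = r & cf v = c].
Proof.
move=> hd hr hc hv.
have [hd' [hr' [[N' hc'] ev]]] := dec_spec v.
rewrite (Esum_eq e hc) in hv; rewrite (Esum_eq e hc') in ev.
have [a1 [a2 a3]] := dec_uniq hd' hr' hc' hd hr hc (etrans (esym ev) hv).
by [].
Qed.

Lemma dec_lin a u v :
  [/\ pd (a *: u + v) = a *: pd u + pd v, pr (a *: u + v) = a *: pr u + pr v &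
   cf (a *: u + v) = fun i => a * cf u i + cf v i].
Proof.
have [du [ru [[Nu cu] eu]]] := dec_spec u.
have [dv [rv [[Nv cv] ev]]] := dec_spec v.
have s1 := supp_max (M:=Nv) cu; have s2 := supp_maxr (N:=Nu) cv.
apply: (dec_eq (N := maxn Nu Nv)).
- exact: dom_lin.
- exact: ran_lin.
- exact: supp_lin.
rewrite (Esum_lin e a s1 s2).
by rewrite {1}eu {1}ev lin3.
Qed.

Definition ff x := epsilon (inhabits 0) (fun y => G (x,y)).
Definition fi y := epsilon (inhabits 0) (fun x => G (x,y)).

Lemma Gff x : dom x -> G (x, ff x).
Proof. by move=> h; apply: (epsilon_spec (inhabits 0) (fun y => G (x,y))). Qed.
Lemma Gfi y : ran y -> G (fi y, y).
Proof. by move=> h; apply: (epsilon_spec (inhabits 0) (fun x => G (x,y))). Qed.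

Lemma ff_eq x y : G (x,y) -> ff x = y.
Proof.
move=> h; have h' := Gff (ex_intro _ y h).
have := Gc (-1) h h'; rewrite !scaleN1r addNr => /Gfun /eqP.
by rewrite addrC subr_eq0 => /eqP.
Qed.
Lemma fi_eq x y : G (x,y) -> fi y = x.
Proof.
move=> h; have h' := Gfi (ex_intro _ x h).
have := Gc (-1) h h'; rewrite !scaleN1r addNr => /Ginj /eqP.
by rewrite addrC subr_eq0 => /eqP.
Qed.

Lemma ff_ran x : dom x -> ran (ff x).
Proof. by move=> h; exists x; exact: Gff. Qed.
Lemma fi_dom y : ran y -> dom (fi y).
Proof. by move=> h; exists y; exact: Gfi. Qed.

Lemma ff_lin a x x' : dom x -> dom x' -> ff (a *: x + x') = a *: ff x + ff x'.
Proof. by move=> h h'; apply: ff_eq; apply: Gc; apply: Gff. Qed.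
Lemma fi_lin a x x' : ran x -> ran x' -> fi (a *: x + x') = a *: fi x + fi x'.
Proof. by move=> h h'; apply: fi_eq; apply: Gc; apply: Gfi. Qed.

Lemma ff0 : ff 0 = 0. Proof. exact: ff_eq. Qed.
Lemma fi0 : fi 0 = 0. Proof. exact: fi_eq. Qed.
Lemma fiff x : dom x -> fi (ff x) = x.
Proof. by move=> h; apply: fi_eq; exact: Gff. Qed.
Lemma fffi y : ran y -> ff (fi y) = y.
Proof. by move=> h; apply: ff_eq; exact: Gfi. Qed.

Definition ev (c : nat -> K) i := if odd i then 0 else c i.
Definition sw (c : nat -> K) i := if odd i then c i.-1 else c i.+1.

Lemma supp_ev N c : supp N c -> supp N (ev c).
Proof. by move=> s i h; rewrite /ev s // if_same. Qed.
Lemma supp_sw N c : supp N c -> supp N.+1 (sw c).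
Proof.
move=> s [|i] //; rewrite ltnS => h; rewrite /sw /=; case: (odd i) => /=; apply: s => //.
by do 2!apply: leqW.
Qed.

Lemma ev_lin a c1 c2 : ev (fun i => a * c1 i + c2 i) = fun i => a * ev c1 i + ev c2 i.
Proof.
by apply: functional_extensionality => i; rewrite /ev; case: odd; rewrite ?mulr0 ?addr0.
Qed.
Lemma sw_lin a c1 c2 : sw (fun i => a * c1 i + c2 i) = fun i => a * sw c1 i + sw c2 i.
Proof. by apply: functional_extensionality => i; rewrite /sw; case: odd. Qed.
Lemma evev c : ev (ev c) = ev c.
Proof. by apply: functional_extensionality => i; rewrite /ev; case: odd. Qed.
Lemma swsw c : sw (sw c) = c.
Proof.
apply: functional_extensionality => -[|i] //; rewrite /sw /=.
by case: (odd i).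
Qed.
Lemma evsw c : ev (sw c) = fun i => (-1) * sw (ev c) i + sw c i.
Proof.
apply: functional_extensionality => -[|i]; rewrite /ev /sw /=.
  by rewrite mulr0 add0r.
case: (odd i) => /=; first by rewrite mulr0 add0r.
by rewrite mulN1r addNr.
Qed.

Definition piF v := pd v + Esum e (ev (cf v)).
Definition TF v := fi (pr v) + ff (pd v) + Esum e (sw (cf v)).
Definition muF v := cf v 0%N - cf v 1%N.

Lemma common u v : exists N, supp N (cf u) /\ supp N (cf v).
Proof.
have [_ [_ [[Nu su] _]]] := dec_spec u; have [_ [_ [[Nv sv] _]]] := dec_spec v.
by exists (maxn Nu Nv); split; [exact: supp_max|exact: supp_maxr].
Qed.

Lemma lpiF : linmap piF.
Proof.
move=> a u v; have [h1 h2 h3] := dec_lin a u v.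
have [N [su sv]] := common u v.
rewrite /piF h1 h3 ev_lin (Esum_lin e a (supp_ev su) (supp_ev sv)).
by rewrite scalerDr addrACA.
Qed.

Lemma lTF : linmap TF.
Proof.
move=> a u v; have [h1 h2 h3] := dec_lin a u v.
have [N [su sv]] := common u v.
have [du [ru _]] := dec_spec u; have [dv [rv _]] := dec_spec v.
rewrite /TF h1 h2 h3 sw_lin (Esum_lin e a (supp_sw su) (supp_sw sv)).
by rewrite fi_lin // ff_lin // lin3.
Qed.

Lemma lmuF a u v : muF (a *: u + v) = a * muF u + muF v.
Proof.
have [_ _ h3] := dec_lin a u v.
by rewrite /muF h3 mulrBr opprD addrACA.
Qed.

Lemma piF_dec v : [/\ pd (piF v) = pd v, pr (piF v) = 0 & cf (piF v) = ev (cf v)].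
Proof.
have [d [_ [[N s] _]]] := dec_spec v.
apply: (dec_eq (N := N)) => //; first exact: ran0.
  exact: supp_ev.
by rewrite /piF addr0.
Qed.

Lemma TF_dec v : [/\ pd (TF v) = fi (pr v), pr (TF v) = ff (pd v) & cf (TF v) = sw (cf v)].
Proof.
have [d [r [[N s] _]]] := dec_spec v.
apply: (dec_eq (N := N.+1)).
- exact: fi_dom.
- exact: ff_ran.
- exact: supp_sw.
by [].
Qed.

Lemma piFpiF v : piF (piF v) = piF v.
Proof. by have [h1 _ h3] := piF_dec v; rewrite {1}/piF h1 h3 evev. Qed.

Lemma TFTF v : TF (TF v) = v.
Proof.
have [h1 h2 h3] := TF_dec v.
have [d [r [_ ev]]] := dec_spec v.
by rewrite {1}/TF h1 h2 h3 swsw fiff // fffi // -ev.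
Qed.

Lemma piTF v : piF (TF v) = TF v - TF (piF v).
Proof.
have [h1 h2 h3] := TF_dec v; have [k1 k2 k3] := piF_dec v.
have [N [s _]] := common v v.
rewrite {1}/piF h1 h3 {2}/TF k1 k2 k3 fi0 add0r evsw.
rewrite (Esum_lin e (-1) (supp_sw (supp_ev s)) (supp_sw s)) scaleN1r.
rewrite /TF [fi _ + ff _ + _]addrAC addrKA.
by rewrite -addrA [- _ + _]addrC.
Qed.

Definition dl (i : nat) : K := if i == 0%N then 1 else 0.

Lemma e0_dec : [/\ pd (e 0%N) = 0, pr (e 0%N) = 0 & cf (e 0%N) = dl].
Proof.
apply: (dec_eq (N := 1%N)).
- exact: dom0.
- exact: ran0.
- by move=> [|i].
rewrite (Esum_eq e (N := 1%N)); last by move=> [|i].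
by rewrite /esum big_ord1 /dl /= scale1r !add0r.
Qed.

Lemma piF_e0 : piF (e 0%N) = e 0%N.
Proof.
have [h1 _ h3] := e0_dec.
rewrite /piF h1 h3.
have -> : ev dl = dl.
  by apply: functional_extensionality => -[|i]; rewrite /ev /dl //=; case: odd.
rewrite add0r (Esum_eq e (N := 1%N)); last by move=> [|i].
by rewrite /esum big_ord1 /dl /= scale1r.
Qed.

Lemma muF_e0 : muF (e 0%N) = 1.
Proof. by have [_ _ h3] := e0_dec; rewrite /muF h3 /dl /= subr0. Qed.

Lemma muF_Te0 : muF (TF (e 0%N)) = -1.
Proof.
have [_ _ h3] := TF_dec (e 0%N); have [_ _ k3] := e0_dec.
by rewrite /muF h3 k3 /sw /dl /= sub0r.
Qed.

Hypothesis hinf : infinite_dim V.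

Theorem frame_main : exists phi : Gr V -> Gr V,
    bijective phi /\
    (forall X Y : Gr V, adjacent X Y <-> adjacent (phi X) (phi Y)) /\
    exists P Q : Gr V, distant P Q /\ ~ distant (phi P) (phi Q).
Proof.
exact: (key_main lpiF lTF lmuF piFpiF TFTF piTF piF_e0 muF_e0 muF_Te0 hinf).
Qed.

End Frame.

Section Build.
Variables (K : unitRingType) (V : lmodType K).
Hypothesis hK : forall x : K, x != 0 -> x \is a GRing.unit.
Hypothesis hinf : infinite_dim V.

Lemma scale_inv (a : K) (v w : V) : a != 0 -> a *: v = w -> v = a^-1 *: w.
Proof. by move=> a0 <-; rewrite scalerA mulVr ?scale1r //; exact: hK. Qed.

Definition pick (s : seq V) : V := epsilon (inhabits 0) (fun w => ~ spanS s w).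

Lemma pick_spec s : ~ spanS s (pick s).
Proof.
apply: (epsilon_spec (inhabits 0) (fun w => ~ spanS s w)).
apply: not_all_ex_not => h; apply: hinf; exists s; exact: h.
Qed.

Fixpoint pref n : seq V := if n is n'.+1 then rcons (pref n') (pick (pref n')) else [::].
Definition eseq n := pick (pref n).

Lemma size_pref n : size (pref n) = n.
Proof. by elim: n => //= n IH; rewrite size_rcons IH. Qed.

Lemma nth_pref n i : (i < n)%N -> (pref n)`_i = eseq i.
Proof.
elim: n => // n IH; rewrite ltnS leq_eqVlt => /orP [/eqP ->|lt] /=.
  by rewrite nth_rcons size_pref ltnn eqxx.
by rewrite nth_rcons size_pref lt IH.
Qed.

Lemma eseq_ns n c : eseq n <> esum eseq n c.
Proof.
move=> h; apply: (@pick_spec (pref n)); exists c.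
rewrite -/(eseq n) h /esum.
move: (pref n) (size_pref n) (@nth_pref n) => s es hs; subst.
apply: eq_bigr => i _; by rewrite hs.
Qed.

Lemma indep_eseq : indep eseq.
Proof.
elim=> [c _ i //|N IH c]; rewrite /esum big_ord_recr /= => h.
have cN : c N = 0.
  apply/eqP; apply: contraT => cN0; exfalso; apply: (@eseq_ns N (fun i => - (c N)^-1 * c i)).
  move/eqP: h; rewrite addrC addr_eq0 => /eqP h'.
  rewrite (scale_inv cN0 h') /esum scalerN scaler_sumr -sumrN; apply: eq_bigr => i _.
  by rewrite scalerA mulNr scaleNr.
move: h; rewrite cN scale0r addr0 => h i; rewrite ltnS leq_eqVlt => /orP [/eqP ->//|].
exact: IH h i.
Qed.

End Build.

Section Max.
Variables (K : unitRingType) (V : lmodType K).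
Hypothesis hK : forall x : K, x != 0 -> x \is a GRing.unit.
Variable e : nat -> V.

Definition goodG (A : V * V -> Prop) :=
  (forall a x y x' y', A (x,y) -> A (x',y') -> A (a *: x + x', a *: y + y')) /\
  (forall y, A (0,y) -> y = 0) /\ (forall x, A (x,0) -> x = 0) /\
  (forall x y x' y', A (x,y) -> A (x',y') -> inSp e (x + y') -> x = 0 /\ y' = 0).

Lemma exists_max : exists A, goodG A /\
  forall B, goodG B -> (forall t, A t -> B t) -> forall t, B t -> A t.
Proof.
apply: myZorn => F FG Ftot.
have two : forall t1 t2, (exists X, F X /\ X t1) -> (exists X, F X /\ X t2) ->
    exists X, F X /\ X t1 /\ X t2.
  move=> t1 t2 [X [FX X1]] [Y [FY Y2]].
  case: (Ftot X Y FX FY) => s; first by exists Y; split=> //; split=> //; exact: s.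
  by exists X; split=> //; split=> //; exact: s.
split.
  move=> a x y x' y' h1 h2; have [X [FX [X1 X2]]] := two _ _ h1 h2.
  exists X; split=> //; have [c _] := FG X FX; exact: c.
split.
  move=> y [X [FX X1]]; have [_ [c _]] := FG X FX; exact: c.
split.
  move=> x [X [FX X1]]; have [_ [_ [c _]]] := FG X FX; exact: c.
move=> x y x' y' h1 h2; have [X [FX [X1 X2]]] := two _ _ h1 h2.
have [_ [_ [_ c]]] := FG X FX; exact: (c _ _ _ _ X1 X2).
Qed.

Lemma scale_inv' (a : K) (v w : V) : a != 0 -> a *: v = w -> v = a^-1 *: w.
Proof. by move=> a0 <-; rewrite scalerA mulVr ?scale1r //; exact: hK. Qed.

Variable A : V * V -> Prop.
Hypothesis hA : goodG A.
Hypothesis mA : forall B, goodG B -> (forall t, A t -> B t) -> forall t, B t -> A t.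

Lemma Ac a x y x' y' : A (x,y) -> A (x',y') -> A (a *: x + x', a *: y + y').
Proof. by case: hA => c _; apply: c. Qed.

Lemma A00 : A (0,0).
Proof.
case: (classic (exists t, A t)) => [[[x y] h]|ne].
  by have := Ac (-1) h h; rewrite !scaleN1r !addNr.
apply: (mA (B := fun t => t = (0,0))) => //.
  split; first by move=> a x y x' y' [-> ->] [-> ->]; rewrite scaler0 addr0.
  split; first by move=> y [].
  split; first by move=> x [].
  by move=> x y x' y' [-> _] [_ ->].
by move=> t h; exfalso; apply: ne; exists t.
Qed.

Definition SE z := exists x y x' y' w, A (x,y) /\ A (x',y') /\ inSp e w /\ z = x + y' + w.

Lemma SE_lin a z z' : SE z -> SE z' -> SE (a *: z + z').
Proof.
move=> [x [y [x' [y' [w [h1 [h2 [h3 ->]]]]]]]] [u [v [u' [v' [w' [k1 [k2 [k3 ->]]]]]]]].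
exists (a *: x + u), (a *: y + v), (a *: x' + u'), (a *: y' + v'), (a *: w + w').
split; first exact: Ac.
split; first exact: Ac.
split; first exact: inSp_lin.
by rewrite lin3.
Qed.

Lemma SE0 : SE 0.
Proof.
exists 0, 0, 0, 0, 0; split; first exact: A00.
split; first exact: A00.
by split; [exact: inSp0| rewrite !addr0].
Qed.

Lemma SE_dom x y : A (x,y) -> SE x.
Proof.
move=> h; exists x, y, 0, 0, 0; split=> //; split; first exact: A00.
by split; [exact: inSp0| rewrite !addr0].
Qed.

Lemma SE_ran x y : A (x,y) -> SE y.
Proof.
move=> h; exists 0, 0, x, y, 0; split; first exact: A00.
split=> //; by split; [exact: inSp0| rewrite add0r addr0].
Qed.

Lemma SE_sp w : inSp e w -> SE w.
Proof.
move=> h; exists 0, 0, 0, 0, w; split; first exact: A00.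
split; first exact: A00.
by split=> //; rewrite !add0r.
Qed.

Lemma SE_add z z' : SE z -> SE z' -> SE (z + z').
Proof. by move=> h h'; rewrite -[z]scale1r; apply: SE_lin. Qed.
Lemma SE_scale a z : SE z -> SE (a *: z).
Proof. by move=> h; rewrite -[a *: z]addr0; apply: SE_lin => //; exact: SE0. Qed.
Lemma SE_opp z : SE z -> SE (- z).
Proof. by move=> h; rewrite -scaleN1r; exact: SE_scale. Qed.

Definition SEv v z := exists k z', SE z' /\ z = z' + k *: v.

Lemma ext v u : SE v \/ SEv v u.
Proof.
apply: NNPP => /not_or_and [nv nu].
pose B t := exists x y a, A (x,y) /\ t = (x + a *: v, y + a *: u).
have AB : forall t, A t -> B t.
  by move=> [x y] h; exists x, y, 0; rewrite !scale0r !addr0.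
have Bvu : B (v,u) by exists 0, 0, 1; rewrite !scale1r !add0r; split=> //; exact: A00.
suff gB : goodG B.
  have := mA gB AB Bvu => h; apply: nv; exact: SE_dom h.
have key : forall (a : K) z, SE z -> z = a *: v -> a = 0.
  move=> a z hz hza; apply/eqP; apply: contraT => a0; exfalso; apply: nv.
  by rewrite (scale_inv' a0 (esym hza)); exact: SE_scale.
have keyu : forall (b a : K) z, SE z -> z = b *: u + a *: v -> b = 0.
  move=> b a z hz hza; apply/eqP; apply: contraT => b0; exfalso; apply: nu.
  have e1 : b *: u = z - a *: v by rewrite hza addrK.
  rewrite (scale_inv' b0 e1); exists (- (b^-1 * a)), (b^-1 *: z); split.
    exact: SE_scale.
  by rewrite scalerBr scalerA scaleNr.
case: hA => [c [f [i d]]].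
split.
  move=> b x1 y1 x2 y2 [u1 [w1 [a1 [h1 [-> ->]]]]] [u2 [w2 [a2 [h2 [-> ->]]]]].
  exists (b *: u1 + u2), (b *: w1 + w2), (b * a1 + a2); split; first exact: c.
  congr (_, _); by rewrite !scalerDr !scalerDl !scalerA addrACA.
split.
  move=> y [x1 [y1 [a [h1 []]]]] e1 ->.
  have a0 : a = 0.
    apply: (key a (- x1)); first by apply: SE_opp; exact: SE_dom h1.
    by rewrite -[a *: v](addKr x1) -e1 addr0.
  move: e1 h1; rewrite a0 !scale0r !addr0 => <- h1; exact: f.
split.
  move=> x [x1 [y1 [a [h1 []]]]] -> e1.
  have a0 : a = 0.
    apply: (keyu a 0 (- y1)); first by apply: SE_opp; exact: SE_ran h1.
    by rewrite scale0r addr0 -[a *: u](addKr y1) -e1 addr0.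
  move: e1 h1; rewrite a0 !scale0r !addr0 => <- h1; exact: i.
move=> x y x' y' [x1 [y1 [a [h1 [ex ey]]]]] [x2 [y2 [b [h2 [ex' ey']]]]] sp.
rewrite ex ey' in sp *.
have SEw : SE ((x1 + a *: v) + (y2 + b *: u)) by exact: SE_sp.
have b0 : b = 0.
  apply: (keyu b a _ (SE_add (SE_add SEw (SE_opp (SE_dom h1))) (SE_opp (SE_ran h2)))).
  by rewrite addrAC [y2 + _]addrC addrA addrK addrAC [x1 + _]addrC addrK addrC.
rewrite b0 scale0r addr0 in sp SEw *.
have a0 : a = 0.
  apply: (key a _ (SE_add (SE_add SEw (SE_opp (SE_dom h1))) (SE_opp (SE_ran h2)))).
  by rewrite addrAC [x1 + _]addrC addrK addrK.
rewrite a0 scale0r addr0 in sp *.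
exact: (d _ _ _ _ h1 h2 sp).
Qed.

End Max.

Section Final.
Variables (K : unitRingType) (V : lmodType K).
Hypothesis hK : forall x : K, x != 0 -> x \is a GRing.unit.
Hypothesis hinf : infinite_dim V.

Definition e' (w : V) (n : nat) : V := if n is n'.+1 then eseq V n' else w.

Lemma esum_shift w N c :
  esum (e' w) N.+1 c = c 0%N *: w + esum (eseq V) N (fun i => c i.+1).
Proof. by rewrite /esum big_ord_recl /=; congr (_ + _); apply: eq_bigr => i _; rewrite lift0. Qed.

Theorem final : exists phi : Gr V -> Gr V,
    bijective phi /\
    (forall X Y : Gr V, adjacent X Y <-> adjacent (phi X) (phi Y)) /\
    exists P Q : Gr V, distant P Q /\ ~ distant (phi P) (phi Q).
Proof.
have ind := indep_eseq hK hinf.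
have [A [gA mA]] := exists_max (eseq V).
have A0 := A00 gA mA.
have SEadd := @SE_add _ _ _ _ gA.
have SEopp := SE_opp gA mA.
have SEscale := SE_scale gA mA.
have SEdom := SE_dom gA mA.
have SEran := SE_ran gA mA.
have SEsp := SE_sp gA mA.
case: (gA) => [Gc [Gf [Gi Gd]]].
case: (classic (forall v, SE (eseq V) A v)) => [tot|].
  exact: (frame_main Gc Gf Gi Gd A0 ind tot hinf).
move=> /not_all_ex_not [w nw].
have wc : forall (a : K) z, SE (eseq V) A z -> a *: w = z -> a = 0.
  move=> a z hz ez; apply/eqP; apply: contraT => a0; exfalso; apply: nw.
  by rewrite (scale_inv' hK a0 ez); exact: SEscale.
apply: (frame_main (e := e' w) Gc Gf Gi) => //.
- move=> x y x' y' h1 h2 [[|N] [c ec]].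
    apply: (Gd _ _ _ _ h1 h2); exists 0%N, c; by rewrite ec /esum !big_ord0.
  rewrite esum_shift in ec.
  have c0 : c 0%N = 0.
    apply: (wc _ (x + y' - esum (eseq V) N (fun i => c i.+1))).
      apply: (SEadd); last by apply: (SEopp); apply: (SEsp); exists N, (fun i => c i.+1).
      by apply: (SEadd); [exact: (SEdom _ _ h1)|exact: (SEran _ _ h2)].
    by rewrite ec addrK.
  apply: (Gd _ _ _ _ h1 h2); exists N, (fun i => c i.+1); by rewrite ec c0 scale0r add0r.
- move=> [|N] c; first by [].
  rewrite esum_shift => h.
  have c0 : c 0%N = 0.
    apply: (wc _ (- esum (eseq V) N (fun i => c i.+1))).
      by apply: (SEopp); apply: (SEsp); exists N, (fun i => c i.+1).
    by apply/eqP; rewrite -addr_eq0 h.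
  move: h; rewrite c0 scale0r add0r => /ind h [|i] //.
  by rewrite ltnS => /h.
- move=> v; case: (ext hK gA mA w v) => [//|[k [z' [[x [y [x' [y' [u [h1 [h2 [[N [c ->]] ->]]]]]]]]] ->]]].
  exists x, y, x', y', (esum (eseq V) N c + k *: w); split=> //; split=> //; split.
    exists N.+1, (fun i => if i is i'.+1 then c i' else k).
    by rewrite esum_shift addrC.
  by rewrite addrA.
Qed.

End Final.

Unset Implicit Arguments.
Theorem mainTheorem5 (K : unitRingType)
  (hK : forall x : K, x != 0 -> x \is a GRing.unit)
  (V : lmodType K) (hinf : infinite_dim V) :
  exists phi : Gr V -> Gr V,
    bijective phi /\
    (forall X Y : Gr V, adjacent X Y <-> adjacent (phi X) (phi Y)) /\
    exists P Q : Gr V, distant P Q /\ ~ distant (phi P) (phi Q).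
Proof. exact: final hK hinf. Qed.
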